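(* For all integers $t,s\ge 0$ and $r\ge 1$, $$\max_{\mathbf{u}\in\mathbb{Z}_+^r}\bigl|\mathcal{A}_{t,s}(\mathbf{u})\bigr| = A_{t,s}(r).$$ Consequently, for any $q\ge2$, $\max_{\mathbf{x}\in J_r^*}|\mathcal{B}_{t,s}(\mathbf{x})|=A_{t,s}(r)$.
   Context: For $\mathbf{u}=(u_1,\dots,u_r)\in\mathbb{Z}_+^r$ (positive integers), the asymmetric error ball is $\mathcal{A}_{t,s}(\mathbf{u})=\{\mathbf{v}\in\mathbb{Z}_+^r:\ \sum_{i=1}^r\max\{0,u_i-v_i\}\le s,\ \sum_{i=1}^r\max\{0,v_i-u_i\}\le t\}$. The numbers $A_{t,s}(r)$ (integers $t,s$, $r\ge1$) are defined by: $A_{t,s}(r)=0$ if $t<0$ or $s<0$; $A_{t,s}(1)=t+s+1$ for $t,s\ge0$; for $r\ge2$, $t,s\ge0$: $A_{t,s}(r)=\sum_{i=1}^{t}A_{t-i,s}(r-1)+\sum_{i=1}^{s}A_{t,s-i}(r-1)+A_{t,s}(r-1)$. For the consequence: $J_r^*$ is the set of strings over $\Sigma_q=\{0,\dots,q-1\}$ with exactly $r$ runs; writing $\mathbf{x}=c_1^{u_1}\cdots c_r^{u_r}$ ($c_i\ne c_{i+1}$, $u_i\ge1$), the sticky-insdel ball $\mathcal{B}_{t,s}(\mathbf{x})$ is the set of strings $c_1^{v_1}\cdots c_r^{v_r}$ with $(v_1,\dots,v_r)\in\mathcal{A}_{t,s}(u_1,\dots,u_r)$ (i.e. strings obtainable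 by at most $t$ sticky insertions and at most $s$ sticky deletions). *)

(* Defs.v *)
From mathcomp Require Import all_boot.
Set Implicit Arguments. Unset Strict Implicit. Unset Printing Implicit Defensive.

Definition Zplus (r : nat) (u : seq nat) : bool :=
  (size u == r) && all (fun x => 0 < x) u.

(* Asymmetric error ball A_{t,s}(u) as a predicate on v.
   On nat, truncated subtraction a - b = max{0, a - b}. *)
Definition asym_ball (t s : nat) (u v : seq nat) : Prop :=
  Zplus (size u) v /\
  sumn [seq p.1 - p.2 | p <- zip u v] <= s /\
  sumn [seq p.2 - p.1 | p <- zip u v] <= t.

(* A_{t,s}(k+1), defined by recursion on k = r - 1 (t, s >= 0). *)
Fixpoint Arec (k t s : nat) {struct k} : nat :=
  match k with
  | 0 => t + s + 1
  | k'.+1 => \sum_(1 <= i < t.+1) Arec k' (t - i) s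
           + \sum_(1 <= i < s.+1) Arec k' t (s - i)
           + Arec k' t s
  end.

Definition Anum (t s r : nat) : nat := Arec r.-1 t s.

Definition has_card (T : eqType) (P : T -> Prop) (n : nat) : Prop :=
  exists l : seq T, [/\ uniq l, size l = n & forall x, x \in l <-> P x].

(* run-length encoding: x = c_1^{u_1} ... c_r^{u_r}, c_i <> c_{i+1}, u_i >= 1 *)
Fixpoint rle (T : eqType) (x : seq T) : seq (T * nat) :=
  match x with
  | [::] => [::]
  | a :: x' =>
      match rle x' with
      | [::] => [:: (a, 1)]
      | (b, n) :: r => if a == b then (b, n.+1) :: r else (a, 1) :: (b, n) :: r
      end
  end.

Definition nruns (T : eqType) (x : seq T) : nat := size (rle x).

Definition sticky_ball (T : eqType) (t s : nat) (x y : seq T) : Prop :=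
  exists v : seq nat,
    asym_ball t s (unzip2 (rle x)) v /\
    y = flatten [seq nseq p.2 p.1 | p <- zip (unzip1 (rle x)) v].

(* Main.v *)
Require Import Defs.
From mathcomp Require Import all_boot zify.
Set Implicit Arguments. Unset Strict Implicit.

Fixpoint L (t s : nat) (u : seq nat) : seq (seq nat) :=
  match u with
  | [::] => [:: [::]]
  | a :: u' => [seq b :: w | b <- iota (a - minn s a.-1) (minn s a.-1 + t.+1),
                             w <- L (t - (b - a)) (s - (a - b)) u']
  end.

Fixpoint Bc (k t s : nat) : nat :=
  match k with
  | 0 => 1
  | k'.+1 => \sum_(1 <= i < t.+1) Bc k' (t - i) s
           + \sum_(1 <= i < s.+1) Bc k' t (s - i)
           + Bc k' t s
  end.

Lemma Bc_Arec k t s : Bc k.+1 t s = Arec k t s.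
Proof.
elim: k t s => [|k IH] t s.
  by rewrite /= !sum_nat_const_nat !muln1 !subSS !subn0.
change (Bc k.+2 t s) with (\sum_(1 <= i < t.+1) Bc k.+1 (t - i) s + \sum_(1 <= i < s.+1) Bc k.+1 t (s - i) + Bc k.+1 t s).
rewrite [Arec _ _ _]/=.
congr (_ + _ + _); last exact: IH.
  by apply: eq_bigr => i _; rewrite IH.
by apply: eq_bigr => i _; rewrite IH.
Qed.

Lemma sumn_big (T : Type) (f : T -> nat) l :
  sumn [seq f x | x <- l] = \sum_(x <- l) f x.
Proof. by elim: l => [|x l IH] /=; rewrite ?big_nil ?big_cons ?IH. Qed.

Lemma rev_sum (G : nat -> nat) m a : m <= a ->
  \sum_(b <- iota (a - m) m) G (a - b) = \sum_(i <- iota 1 m) G i.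
Proof.
elim: m => [|m IH] Hm; first by rewrite !big_nil.
have -> : iota (a - m.+1) m.+1 = (a - m.+1) :: iota (a - m) m.
  by rewrite /=; congr (_ :: iota _ _); lia.
rewrite big_cons IH; last lia.
rewrite -addn1 iotaD big_cat /= big_cons big_nil.
have -> : a - (a - (m + 1)) = 1 + m by lia.
lia.
Qed.

Lemma asym_nil t s v : asym_ball t s [::] v <-> v = [::].
Proof.
rewrite /asym_ball /Zplus; case: v => [|b w] /=; split => //; by case.
Qed.

Lemma asym_cons t s a u b w :
  asym_ball t s (a :: u) (b :: w) <->
  [/\ 0 < b, a - b <= s, b - a <= t & asym_ball (t - (b - a)) (s - (a - b)) u w].
Proof.
rewrite /asym_ball /Zplus /= eqSS.
split.
  move=> [/and3P[e pb aw] [h1 h2]].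
  split => //; try lia.
move=> [pb h1 h2 [/andP[e aw] [h3 h4]]].
split; first by rewrite e pb aw.

split; lia.
Qed.

Lemma memL u : all (fun x => 0 < x) u ->
  forall t s v, v \in L t s u <-> asym_ball t s u v.
Proof.
elim: u => [|a u IH] pu t s v.
  rewrite asym_nil inE; split; by move/eqP.
move: pu => /= /andP[pa pu].
case: v => [|b w].
  split.
    by move=> /allpairsPdep [x [y [_ _ //]]].
  by rewrite /asym_ball /Zplus /=; case.
rewrite asym_cons; split.
  move=> /allpairsPdep [x [y [hx hy [-> ->]]]].
  rewrite mem_iota in hx.
  move: hy => /(IH pu) hy.
  split => //; lia.
move=> [pb h1 h2 /(IH pu) hw].
apply/allpairsPdep; exists b, w; split => //.
rewrite mem_iota; lia.
Qed.

Lemma uniqL u : forall t s, uniq (L t s u).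
Proof.
elim: u => [|a u IH] t s //=.
apply: allpairs_uniq_dep => //; first exact: iota_uniq.
move=> [x1 y1] [x2 y2] _ _ /= [e1 e2].
by subst.
Qed.

Lemma size_L u : forall t s,
  size (L t s u) <= Bc (size u) t s /\
  (all (fun x => s < x) u -> size (L t s u) = Bc (size u) t s).
Proof.
elim: u => [|a u IH] t s; first by [].
set m := minn s a.-1.
have Hs : size (L t s (a :: u)) =
   \sum_(i <- iota 1 m) size (L t (s - i) u) +
   (size (L t s u) + \sum_(i <- iota 1 t) size (L (t - i) s u)).
  rewrite /= size_allpairs_dep sumn_big iotaD big_cat.
  congr (_ + _).
    rewrite -(@rev_sum (fun i => size (L t (s - i) u)) m a); last lia.
    apply: eq_big_seq => b; rewrite mem_iota => hb.
    by congr (size (L _ _ _)); lia.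
  have -> : a - m + m = a + 0 by lia.
  rewrite iotaDl big_map /= big_cons.
  congr (size (L _ _ _) + _); try lia.
  apply: eq_big_seq => i; rewrite mem_iota => hi.
  by congr (size (L _ _ _)); lia.
have E1 : iota 1 s = iota 1 m ++ iota (1 + m) (s - m).
  by rewrite -iotaD; congr iota; lia.
rewrite Hs [size (_ :: _)]/= [Bc _.+1 _ _]/= /index_iota !subSS !subn0 E1 big_cat /=.
have [h0 e0] := IH t s.
have A1 : \sum_(i <- iota 1 m) size (L t (s - i) u) <= \sum_(i <- iota 1 m) Bc (size u) t (s - i).
  by apply: leq_sum => i _; case: (IH t (s - i)).
have A2 : \sum_(i <- iota 1 t) size (L (t - i) s u) <= \sum_(i <- iota 1 t) Bc (size u) (t - i) s.
  by apply: leq_sum => i _; case: (IH (t - i) s).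
split; first lia.
move=> /= /andP[ha hu].
have -> : s - m = 0 by lia.
rewrite big_nil addn0 e0 //.
have -> : \sum_(i <- iota 1 m) size (L t (s - i) u) = \sum_(i <- iota 1 m) Bc (size u) t (s - i).
  apply: eq_bigr => i _; case: (IH t (s - i)) => _ ->//.
  by apply: sub_all hu => x; lia.
have -> : \sum_(i <- iota 1 t) size (L (t - i) s u) = \sum_(i <- iota 1 t) Bc (size u) (t - i) s.
  by apply: eq_bigr => i _; case: (IH (t - i) s) => _ ->.
lia.
Qed.

Definition phi (T : eqType) (c : seq T) (v : seq nat) : seq T :=
  flatten [seq nseq p.2 p.1 | p <- zip c v].

Lemma rle_nseq (T : eqType) (a : T) n y :
  (if rle y is (b, _) :: _ then b != a else true) ->
  rle (nseq n.+1 a ++ y) = (a, n.+1) :: rle y.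
Proof.
elim: n => [|n IH] H.
  rewrite /=; case E: (rle y) H => [|[b m] r] //= H.
  by rewrite eq_sym (negbTE H).
have -> : nseq n.+2 a ++ y = a :: (nseq n.+1 a ++ y) by [].
change (rle (a :: (nseq n.+1 a ++ y))) with (match rle (nseq n.+1 a ++ y) with [::] => [:: (a,1)] | (b, m) :: r => if a == b then (b, m.+1) :: r else (a,1)::(b,m)::r end).
by rewrite IH //= eqxx.
Qed.

Lemma rle_phi (T : eqType) (c : seq T) v :
  size c = size v -> all (fun x => 0 < x) v -> sorted (fun a b => a != b) c ->
  rle (phi c v) = zip c v.
Proof.
elim: c v => [|a c IH] [|n v] //= [e] /andP[pn pv] hs.
case: n pn => // n _.
rewrite /phi [zip _ _]/= map_cons [flatten _]/= -/(phi c v).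
rewrite rle_nseq IH //; try exact: path_sorted hs.
move: hs e; case: c {IH} => [|b c] //; case: v {pv} => [|m v] //= /andP[h _] _.
by rewrite eq_sym.
Qed.

Lemma rle_pos (T : eqType) (x : seq T) : all (fun p => 0 < p.2) (rle x).
Proof.
elim: x => [|a x IH] //=.
case E: (rle x) IH => [|[b n] r] //=.
by case: eqP => _ /= //; case/andP.
Qed.

Lemma rle_sorted (T : eqType) (x : seq T) : sorted (fun a b => a != b) (unzip1 (rle x)).
Proof.
elim: x => [|a x IH] //=.
case E: (rle x) IH => [|[b n] r] //=.
case: eqP => [_|ne] /= H //.
by rewrite H andbT; apply/eqP.
Qed.

Lemma rle_flat (T : eqType) (x : seq T) : phi (unzip1 (rle x)) (unzip2 (rle x)) = x.
Proof.
rewrite /phi zip_unzip.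
elim: x => [|a x IH] //=.
case E: (rle x) IH => [|[b n] r] /= IH; first by rewrite -IH.
case: eqP => [->|_] /=; by rewrite IH.
Qed.

Lemma sticky_card (T : eqType) (x : seq T) t s :
  has_card (sticky_ball t s x) (size (L t s (unzip2 (rle x)))).
Proof.
set c := unzip1 (rle x); set u := unzip2 (rle x).
have pu : all (fun x => 0 < x) u by rewrite /u all_map; exact: rle_pos.
have inL v : v \in L t s u -> size v = size c /\ all (fun x => 0 < x) v.
  move=> /(memL pu) [/andP[/eqP e a] _].
  by rewrite /c size_map e /u size_map.
exists [seq phi c v | v <- L t s u]; split.
- rewrite map_inj_in_uniq; first exact: uniqL.
  move=> v1 v2 h1 h2 e.
  have [s1 a1] := inL _ h1; have [s2 a2] := inL _ h2.
  have := congr1 (fun y => unzip2 (rle y)) e => /=.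
  by rewrite !rle_phi ?rle_sorted // !unzip2_zip // ?s1 ?s2.
- by rewrite size_map.
- move=> y; split.
    move=> /mapP [v hv ->]; exists v; split => //.
    exact/(memL pu).
  move=> [v [hv ->]]; apply/mapP; exists v => //.
  exact/(memL pu).
Qed.

Lemma alt_sorted (T : eqType) (o0 o1 : T) : o0 != o1 -> forall k,
  sorted (fun a b => a != b) [seq (if odd i then o1 else o0) | i <- iota 0 k].
Proof.
move=> ne.
have H : forall k m, path (fun a b => a != b) (if odd m then o1 else o0)
            [seq (if odd i then o1 else o0) | i <- iota m.+1 k].
  elim=> [|k IH] m //=.
  have := IH m.+1; rewrite /= => ->; rewrite andbT.
  by case: (odd m) => //=; rewrite eq_sym.
by case=> [|k] //=; apply: H.
Qed.

Theorem mainTheorem2 (t s r : nat) (hr : 1 <= r) :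
  ((forall u : seq nat, Zplus r u ->
      exists n, has_card (asym_ball t s u) n /\ n <= Anum t s r) /\
   (exists u : seq nat, Zplus r u /\ has_card (asym_ball t s u) (Anum t s r)))
  /\
  (forall q : nat, 2 <= q ->
     (forall x : seq 'I_q, nruns x = r ->
        exists n, has_card (sticky_ball t s x) n /\ n <= Anum t s r) /\
     (exists x : seq 'I_q, nruns x = r /\
        has_card (sticky_ball t s x) (Anum t s r))).
Proof.
case: r hr => // k _.
have An : Anum t s k.+1 = Bc k.+1 t s by rewrite /Anum Bc_Arec.
rewrite An.
have cardL u : all (fun x => 0 < x) u -> has_card (asym_ball t s u) (size (L t s u)).
  move=> pu; exists (L t s u); split => //; first exact: uniqL.
  move=> v; exact: memL.
have pn : all (fun x => 0 < x) (nseq k.+1 s.+1) by rewrite all_nseq.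
have en : size (L t s (nseq k.+1 s.+1)) = Bc k.+1 t s.
  case: (size_L (nseq k.+1 s.+1) t s) => _ ->; first by rewrite size_nseq.
  by rewrite all_nseq; apply/orP; right.
split.
  split.
    move=> u /andP[/eqP su pu]; exists (size (L t s u)); split; first exact: cardL.
    by rewrite -su; case: (size_L u t s).
  exists (nseq k.+1 s.+1); split; first by rewrite /Zplus size_nseq eqxx.
  by rewrite -en; apply: cardL.
move=> q hq; split.
  move=> x hx; exists (size (L t s (unzip2 (rle x)))); split; first exact: sticky_card.
  case: (size_L (unzip2 (rle x)) t s) => h _.
  by rewrite size_map -/(nruns x) hx in h.
pose o0 : 'I_q := Ordinal (ltn_trans (isT : 0 < 1) hq).
pose o1 : 'I_q := Ordinal hq.
have ne : o0 != o1 by [].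
set c := [seq (if odd i then o1 else o0) | i <- iota 0 k.+1].
have hrle : rle (phi c (nseq k.+1 s.+1)) = zip c (nseq k.+1 s.+1).
  apply: rle_phi => //; last exact: alt_sorted.
  by rewrite size_map size_iota size_nseq.
exists (phi c (nseq k.+1 s.+1)); split.
  by rewrite /nruns hrle size_zip size_map size_iota size_nseq minnn.
have := sticky_card (phi c (nseq k.+1 s.+1)) t s.
by rewrite hrle unzip2_zip ?en // size_map size_iota size_nseq.
Qed.
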